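(* $\operatorname{BSR}(4,4)\ge 10$. In particular, the biquadratic form \[P(\mathbf{x},\mathbf{y})=x_1^2y_1^2+x_1^2y_2^2+x_2^2y_1^2+x_2^2y_3^2+x_3^2y_1^2+x_3^2y_4^2+x_4^2y_2^2+x_4^2y_3^2+x_4^2y_4^2+(x_1y_3+x_2y_4)^2\] on $\mathbb{R}^4\times\mathbb{R}^4$ has SOS rank $10$ (i.e., it cannot be written as a sum of fewer than 10 squares of bilinear forms).
   Context: An $m\times n$ biquadratic form is a polynomial $P(\mathbf{x},\mathbf{y})=\sum_{i,k=1}^m\sum_{j,l=1}^n a_{ijkl}x_ix_ky_jy_l$ with real coefficients, $\mathbf{x}\in\mathbb{R}^m$, $\mathbf{y}\in\mathbb{R}^n$. It is SOS if $P=\sum_{p=1}^r f_p^2$ for some real bilinear forms $f_p(\mathbf{x},\mathbf{y})=\sum_{i,j}c^{(p)}_{ij}x_iy_j$; the least such $r$ is the SOS rank $\operatorname{sos}(P)$. $\operatorname{BSR}(m,n)$ is the maximum of $\operatorname{sos}(P)$ over all $m\times n$ SOS biquadratic forms $P$. *)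

(* Defs.v *)
From HB Require Import structures.
From mathcomp Require Import all_boot all_order all_algebra.
From mathcomp Require Import reals.
Set Implicit Arguments. Unset Strict Implicit. Unset Printing Implicit Defensive.
Import Order.TTheory GRing.Theory Num.Theory.
Local Open Scope ring_scope.

Section Biquad.
Variable R : realType.

Definition biquad (m n : nat) (a : 'I_m -> 'I_n -> 'I_m -> 'I_n -> R)
    (x : 'I_m -> R) (y : 'I_n -> R) : R :=
  \sum_(i < m) \sum_(j < n) \sum_(k < m) \sum_(l < n)
     a i j k l * x i * x k * y j * y l.

Definition is_biquad (m n : nat) (P : ('I_m -> R) -> ('I_n -> R) -> R) : Prop :=
  exists a : 'I_m -> 'I_n -> 'I_m -> 'I_n -> R,
    forall x y, P x y = biquad a x y.

Definition bilin (m n : nat) (c : 'I_m -> 'I_n -> R)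
    (x : 'I_m -> R) (y : 'I_n -> R) : R :=
  \sum_(i < m) \sum_(j < n) c i j * x i * y j.

Definition sos_with (m n : nat) (P : ('I_m -> R) -> ('I_n -> R) -> R) (r : nat)
    : Prop :=
  exists c : 'I_r -> 'I_m -> 'I_n -> R,
    forall x y, P x y = \sum_(p < r) (bilin (c p) x y) ^+ 2.

Definition is_sos (m n : nat) (P : ('I_m -> R) -> ('I_n -> R) -> R) : Prop :=
  exists r, sos_with P r.

Definition sos_rank_is (m n : nat) (P : ('I_m -> R) -> ('I_n -> R) -> R)
    (k : nat) : Prop :=
  sos_with P k /\ (forall r, sos_with P r -> (k <= r)%N).

Definition BSR_ge (m n k : nat) : Prop :=
  exists P : ('I_m -> R) -> ('I_n -> R) -> R,
    [/\ is_biquad P, is_sos P & forall r, sos_with P r -> (k <= r)%N].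

Definition P_cor (x y : 'I_4 -> R) : R :=
  let x1 := x (inord 0) in let x2 := x (inord 1) in
  let x3 := x (inord 2) in let x4 := x (inord 3) in
  let y1 := y (inord 0) in let y2 := y (inord 1) in
  let y3 := y (inord 2) in let y4 := y (inord 3) in
  x1^+2 * y1^+2 + x1^+2 * y2^+2 + x2^+2 * y1^+2 + x2^+2 * y3^+2
  + x3^+2 * y1^+2 + x3^+2 * y4^+2 + x4^+2 * y2^+2 + x4^+2 * y3^+2
  + x4^+2 * y4^+2 + (x1 * y3 + x2 * y4)^+2.

End Biquad.

(* Main.v *)
Require Import Defs.
From HB Require Import structures.
From mathcomp Require Import all_boot all_order all_algebra.
From mathcomp Require Import reals.
From mathcomp Require Import ring lra.
Set Implicit Arguments. Unset Strict Implicit. Unset Printing Implicit Defensive.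
Import Order.TTheory GRing.Theory Num.Theory.
Local Open Scope ring_scope.

Section S.
Variable R : realType.

Definition ev (a0 a1 a2 a3 : R) : 'I_4 -> R := fun i => nth 0 [:: a0; a1; a2; a3] i.
Lemma ev0 a0 a1 a2 a3 : ev a0 a1 a2 a3 (inord 0) = a0. Proof. by rewrite /ev inordK. Qed.
Lemma ev1 a0 a1 a2 a3 : ev a0 a1 a2 a3 (inord 1) = a1. Proof. by rewrite /ev inordK. Qed.
Lemma ev2 a0 a1 a2 a3 : ev a0 a1 a2 a3 (inord 2) = a2. Proof. by rewrite /ev inordK. Qed.
Lemma ev3 a0 a1 a2 a3 : ev a0 a1 a2 a3 (inord 3) = a3. Proof. by rewrite /ev inordK. Qed.

Lemma sum4 (f : 'I_4 -> R) :
  \sum_(i < 4) f i = f (inord 0) + f (inord 1) + f (inord 2) + f (inord 3).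
Proof.
rewrite !big_ord_recr big_ord0 /= add0r.
by congr (_ + _ + _ + _); congr f; apply: val_inj; rewrite /= inordK.
Qed.

Lemma sum10 (f : 'I_10 -> R) :
  \sum_(i < 10) f i = f (inord 0) + f (inord 1) + f (inord 2) + f (inord 3) + f (inord 4)
   + f (inord 5) + f (inord 6) + f (inord 7) + f (inord 8) + f (inord 9).
Proof.
rewrite !big_ord_recr big_ord0 /= add0r.
by congr (_ + _ + _ + _ + _ + _ + _ + _ + _ + _); congr f; apply: val_inj; rewrite /= inordK.
Qed.


Lemma sE_0 (F : 'I_4 -> R) : \sum_(i < 4) (ev 1 0 0 0) i * F i = F (inord 0).
Proof. by rewrite sum4 ev0 ev1 ev2 ev3; ring. Qed.

Lemma sE_1 (F : 'I_4 -> R) : \sum_(i < 4) (ev 0 1 0 0) i * F i = F (inord 1).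
Proof. by rewrite sum4 ev0 ev1 ev2 ev3; ring. Qed.

Lemma sE_2 (F : 'I_4 -> R) : \sum_(i < 4) (ev 0 0 1 0) i * F i = F (inord 2).
Proof. by rewrite sum4 ev0 ev1 ev2 ev3; ring. Qed.

Lemma sE_3 (F : 'I_4 -> R) : \sum_(i < 4) (ev 0 0 0 1) i * F i = F (inord 3).
Proof. by rewrite sum4 ev0 ev1 ev2 ev3; ring. Qed.

Lemma sE_01 (F : 'I_4 -> R) : \sum_(i < 4) (ev 1 1 0 0) i * F i = F (inord 0) + F (inord 1).
Proof. by rewrite sum4 ev0 ev1 ev2 ev3; ring. Qed.

Lemma sE_02 (F : 'I_4 -> R) : \sum_(i < 4) (ev 1 0 1 0) i * F i = F (inord 0) + F (inord 2).
Proof. by rewrite sum4 ev0 ev1 ev2 ev3; ring. Qed.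

Lemma sE_03 (F : 'I_4 -> R) : \sum_(i < 4) (ev 1 0 0 1) i * F i = F (inord 0) + F (inord 3).
Proof. by rewrite sum4 ev0 ev1 ev2 ev3; ring. Qed.

Lemma sE_12 (F : 'I_4 -> R) : \sum_(i < 4) (ev 0 1 1 0) i * F i = F (inord 1) + F (inord 2).
Proof. by rewrite sum4 ev0 ev1 ev2 ev3; ring. Qed.

Lemma sE_13 (F : 'I_4 -> R) : \sum_(i < 4) (ev 0 1 0 1) i * F i = F (inord 1) + F (inord 3).
Proof. by rewrite sum4 ev0 ev1 ev2 ev3; ring. Qed.

Lemma sE_23 (F : 'I_4 -> R) : \sum_(i < 4) (ev 0 0 1 1) i * F i = F (inord 2) + F (inord 3).
Proof. by rewrite sum4 ev0 ev1 ev2 ev3; ring. Qed.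

Section Inner.
Variable r : nat.
Variable c : 'I_r -> 'I_4 -> 'I_4 -> R.
Definition g i j k l := \sum_(p < r) c p i j * c p k l.

Lemma gC i j k l : g i j k l = g k l i j.
Proof. by apply: eq_bigr => p _; rewrite mulrC. Qed.

Lemma key x y : \sum_(p < r) (bilin (c p) x y) ^+ 2 =
  \sum_(i < 4) x i * \sum_(j < 4) y j * \sum_(k < 4) x k * \sum_(l < 4) y l * g i j k l.
Proof.
rewrite /bilin /g.
transitivity (\sum_(p<r) \sum_(i<4) \sum_(j<4) \sum_(k<4) \sum_(l<4)
   ((c p i j * x i * y j) * (c p k l * x k * y l))).
  apply: eq_bigr => p _; rewrite expr2 big_distrl /=; apply: eq_bigr => i _.
  rewrite big_distrl /=; apply: eq_bigr => j _.
  rewrite big_distrr /=; apply: eq_bigr => k _.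
  by rewrite big_distrr.
rewrite exchange_big; apply: eq_bigr => i _ /=.
rewrite exchange_big big_distrr /=; apply: eq_bigr => j _ /=.
rewrite exchange_big mulrA big_distrr /=; apply: eq_bigr => k _ /=.
rewrite exchange_big mulrA big_distrr /=; apply: eq_bigr => l _ /=.
rewrite mulrA big_distrr /=; apply: eq_bigr => p _ /=.
ring.
Qed.


Lemma sumsq0 (f : 'I_r -> R) : \sum_(p < r) f p * f p = 0 -> forall p, f p = 0.
Proof.
move=> /eqP; rewrite psumr_eq0 => [/allP Hp p|p _]; last by rewrite -expr2 sqr_ge0.
by have /implyP/(_ isT) := Hp p (mem_index_enum p); rewrite mulf_eq0 orbb => /eqP.
Qed.

Lemma gZl i j (Hc : forall p, c p i j = 0) k l : g i j k l = 0.
Proof. by rewrite /g big1 // => p _; rewrite Hc mul0r. Qed.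
Lemma gZr i j (Hc : forall p, c p i j = 0) k l : g k l i j = 0.
Proof. by rewrite /g big1 // => p _; rewrite Hc mulr0. Qed.
Lemma gEl i j i' j' (Hc : forall p, c p i j = c p i' j') k l : g i j k l = g i' j' k l.
Proof. by apply: eq_bigr => p _; rewrite Hc. Qed.
Lemma gEr i j i' j' (Hc : forall p, c p i j = c p i' j') k l : g k l i j = g k l i' j'.
Proof. by apply: eq_bigr => p _; rewrite Hc. Qed.
Lemma gdiff i j i' j' : g i j i j - g i j i' j' - g i' j' i j + g i' j' i' j' = 0 ->
  forall p, c p i j = c p i' j'.
Proof.
move=> H p; apply/eqP; rewrite -subr_eq0; apply/eqP; move: p; apply: sumsq0.
rewrite /g -!sumrB -big_split /= in H; rewrite -[RHS]H; apply: eq_bigr => p _; ring.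
Qed.

Lemma sumsq0g i j : g i j i j = 0 -> forall p, c p i j = 0.
Proof. exact: sumsq0. Qed.

Lemma biquad_g x y : biquad g x y = \sum_(p < r) (bilin (c p) x y) ^+ 2.
Proof.
rewrite key /biquad; apply: eq_bigr => i _; rewrite mulr_sumr; apply: eq_bigr => j _.
rewrite mulrA mulr_sumr; apply: eq_bigr => k _.
rewrite mulrA mulr_sumr; apply: eq_bigr => l _.
ring.
Qed.


Lemma lower (H : forall x y, P_cor x y = \sum_(p < r) (bilin (c p) x y) ^+ 2) : (10 <= r)%N.
Proof.
have hZ03 : forall p, c p (inord 0) (inord 3) = 0.
  apply: sumsq0g; move: (H (ev 1 0 0 0) (ev 0 0 0 1)); rewrite key !(sE_0, sE_3) /P_cor !ev0 !ev1 !ev2 !ev3 => E; lra.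
have hZ11 : forall p, c p (inord 1) (inord 1) = 0.
  apply: sumsq0g; move: (H (ev 0 1 0 0) (ev 0 1 0 0)); rewrite key !(sE_1, sE_1) /P_cor !ev0 !ev1 !ev2 !ev3 => E; lra.
have hZ21 : forall p, c p (inord 2) (inord 1) = 0.
  apply: sumsq0g; move: (H (ev 0 0 1 0) (ev 0 1 0 0)); rewrite key !(sE_2, sE_1) /P_cor !ev0 !ev1 !ev2 !ev3 => E; lra.
have hZ22 : forall p, c p (inord 2) (inord 2) = 0.
  apply: sumsq0g; move: (H (ev 0 0 1 0) (ev 0 0 1 0)); rewrite key !(sE_2, sE_2) /P_cor !ev0 !ev1 !ev2 !ev3 => E; lra.
have hZ30 : forall p, c p (inord 3) (inord 0) = 0.
  apply: sumsq0g; move: (H (ev 0 0 0 1) (ev 1 0 0 0)); rewrite key !(sE_3, sE_0) /P_cor !ev0 !ev1 !ev2 !ev3 => E; lra.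
have G1 : (g (inord 0) (inord 2) (inord 0) (inord 2)) = 1 by move: (H (ev 1 0 0 0) (ev 0 0 1 0)); rewrite key !(sE_0, sE_2) /P_cor !ev0 !ev1 !ev2 !ev3 => E; lra.
have G2 : (g (inord 1) (inord 3) (inord 1) (inord 3)) = 1 by move: (H (ev 0 1 0 0) (ev 0 0 0 1)); rewrite key !(sE_1, sE_3) /P_cor !ev0 !ev1 !ev2 !ev3 => E; lra.
have G3 : (g (inord 1) (inord 2) (inord 1) (inord 2)) = 1 by move: (H (ev 0 1 0 0) (ev 0 0 1 0)); rewrite key !(sE_1, sE_2) /P_cor !ev0 !ev1 !ev2 !ev3 => E; lra.
have G4 : (g (inord 0) (inord 2) (inord 1) (inord 2)) = 0.
  have := gC (inord 1) (inord 2) (inord 0) (inord 2). move: (H (ev 1 1 0 0) (ev 0 0 1 0)); rewrite key !(sE_01, sE_2) /P_cor !ev0 !ev1 !ev2 !ev3 => E; lra.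
have G5 : (g (inord 1) (inord 2) (inord 1) (inord 3)) = 0.
  have := gC (inord 1) (inord 3) (inord 1) (inord 2). move: (H (ev 0 1 0 0) (ev 0 0 1 1)); rewrite key !(sE_1, sE_23) /P_cor !ev0 !ev1 !ev2 !ev3 => E; lra.
have G6 : (g (inord 0) (inord 2) (inord 1) (inord 3)) = 1.
  have := gC (inord 1) (inord 2) (inord 0) (inord 2). have := gC (inord 1) (inord 3) (inord 0) (inord 2). have := gC (inord 1) (inord 3) (inord 1) (inord 2).
  move: (H (ev 1 1 0 0) (ev 0 0 1 1)); rewrite key !(sE_01, sE_23) /P_cor !ev0 !ev1 !ev2 !ev3 ?(gZl hZ03, gZr hZ03, gZl hZ11, gZr hZ11, gZl hZ21, gZr hZ21, gZl hZ22, gZr hZ22, gZl hZ30, gZr hZ30) => E; lra.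
have h13 : forall p, c p (inord 1) (inord 3) = c p (inord 0) (inord 2).
  move=> p; symmetry; move: p; apply: gdiff. have := gC (inord 1) (inord 3) (inord 0) (inord 2). lra.
have F0000 : (g (inord 0) (inord 0) (inord 0) (inord 0)) = 1.
  move: (H (ev 1 0 0 0) (ev 1 0 0 0)); rewrite key !(sE_0, sE_0) /P_cor !ev0 !ev1 !ev2 !ev3 ?(gZl hZ03, gZr hZ03, gZl hZ11, gZr hZ11, gZl hZ21, gZr hZ21, gZl hZ22, gZr hZ22, gZl hZ30, gZr hZ30) ?(gEl h13) ?(gEr h13) => E; clear -E; lra.
have F0101 : (g (inord 0) (inord 1) (inord 0) (inord 1)) = 1.
  move: (H (ev 1 0 0 0) (ev 0 1 0 0)); rewrite key !(sE_0, sE_1) /P_cor !ev0 !ev1 !ev2 !ev3 ?(gZl hZ03, gZr hZ03, gZl hZ11, gZr hZ11, gZl hZ21, gZr hZ21, gZl hZ22, gZr hZ22, gZl hZ30, gZr hZ30) ?(gEl h13) ?(gEr h13) => E; clear -E; lra.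
have F0202 : (g (inord 0) (inord 2) (inord 0) (inord 2)) = 1.
  move: (H (ev 1 0 0 0) (ev 0 0 1 0)); rewrite key !(sE_0, sE_2) /P_cor !ev0 !ev1 !ev2 !ev3 ?(gZl hZ03, gZr hZ03, gZl hZ11, gZr hZ11, gZl hZ21, gZr hZ21, gZl hZ22, gZr hZ22, gZl hZ30, gZr hZ30) ?(gEl h13) ?(gEr h13) => E; clear -E; lra.
have F0001 : (g (inord 0) (inord 0) (inord 0) (inord 1)) = 0.
  move: (H (ev 1 0 0 0) (ev 1 1 0 0)); rewrite key !(sE_0, sE_01) /P_cor !ev0 !ev1 !ev2 !ev3 ?(gZl hZ03, gZr hZ03, gZl hZ11, gZr hZ11, gZl hZ21, gZr hZ21, gZl hZ22, gZr hZ22, gZl hZ30, gZr hZ30) ?(gEl h13) ?(gEr h13) [g (inord 0) (inord 1) (inord 0) (inord 0)]gC F0000 F0101 => E; clear -E; lra.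
have F0002 : (g (inord 0) (inord 0) (inord 0) (inord 2)) = 0.
  move: (H (ev 1 0 0 0) (ev 1 0 1 0)); rewrite key !(sE_0, sE_02) /P_cor !ev0 !ev1 !ev2 !ev3 ?(gZl hZ03, gZr hZ03, gZl hZ11, gZr hZ11, gZl hZ21, gZr hZ21, gZl hZ22, gZr hZ22, gZl hZ30, gZr hZ30) ?(gEl h13) ?(gEr h13) [g (inord 0) (inord 2) (inord 0) (inord 0)]gC F0000 F0202 => E; clear -E; lra.
have F0102 : (g (inord 0) (inord 1) (inord 0) (inord 2)) = 0.
  move: (H (ev 1 0 0 0) (ev 0 1 1 0)); rewrite key !(sE_0, sE_12) /P_cor !ev0 !ev1 !ev2 !ev3 ?(gZl hZ03, gZr hZ03, gZl hZ11, gZr hZ11, gZl hZ21, gZr hZ21, gZl hZ22, gZr hZ22, gZl hZ30, gZr hZ30) ?(gEl h13) ?(gEr h13) [g (inord 0) (inord 2) (inord 0) (inord 1)]gC F0101 F0202 => E; clear -E; lra.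
have F1010 : (g (inord 1) (inord 0) (inord 1) (inord 0)) = 1.
  move: (H (ev 0 1 0 0) (ev 1 0 0 0)); rewrite key !(sE_1, sE_0) /P_cor !ev0 !ev1 !ev2 !ev3 ?(gZl hZ03, gZr hZ03, gZl hZ11, gZr hZ11, gZl hZ21, gZr hZ21, gZl hZ22, gZr hZ22, gZl hZ30, gZr hZ30) ?(gEl h13) ?(gEr h13) => E; clear -E; lra.
have F1212 : (g (inord 1) (inord 2) (inord 1) (inord 2)) = 1.
  move: (H (ev 0 1 0 0) (ev 0 0 1 0)); rewrite key !(sE_1, sE_2) /P_cor !ev0 !ev1 !ev2 !ev3 ?(gZl hZ03, gZr hZ03, gZl hZ11, gZr hZ11, gZl hZ21, gZr hZ21, gZl hZ22, gZr hZ22, gZl hZ30, gZr hZ30) ?(gEl h13) ?(gEr h13) => E; clear -E; lra.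
have F1012 : (g (inord 1) (inord 0) (inord 1) (inord 2)) = 0.
  move: (H (ev 0 1 0 0) (ev 1 0 1 0)); rewrite key !(sE_1, sE_02) /P_cor !ev0 !ev1 !ev2 !ev3 ?(gZl hZ03, gZr hZ03, gZl hZ11, gZr hZ11, gZl hZ21, gZr hZ21, gZl hZ22, gZr hZ22, gZl hZ30, gZr hZ30) ?(gEl h13) ?(gEr h13) [g (inord 1) (inord 2) (inord 1) (inord 0)]gC F1010 F1212 => E; clear -E; lra.
have F0210 : (g (inord 0) (inord 2) (inord 1) (inord 0)) = 0.
  move: (H (ev 0 1 0 0) (ev 1 0 0 1)); rewrite key !(sE_1, sE_03) /P_cor !ev0 !ev1 !ev2 !ev3 ?(gZl hZ03, gZr hZ03, gZl hZ11, gZr hZ11, gZl hZ21, gZr hZ21, gZl hZ22, gZr hZ22, gZl hZ30, gZr hZ30) ?(gEl h13) ?(gEr h13) [g (inord 1) (inord 0) (inord 0) (inord 2)]gC F1010 F0202 => E; clear -E; lra.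
have F0212 : (g (inord 0) (inord 2) (inord 1) (inord 2)) = 0.
  move: (H (ev 0 1 0 0) (ev 0 0 1 1)); rewrite key !(sE_1, sE_23) /P_cor !ev0 !ev1 !ev2 !ev3 ?(gZl hZ03, gZr hZ03, gZl hZ11, gZr hZ11, gZl hZ21, gZr hZ21, gZl hZ22, gZr hZ22, gZl hZ30, gZr hZ30) ?(gEl h13) ?(gEr h13) [g (inord 1) (inord 2) (inord 0) (inord 2)]gC F1212 F0202 => E; clear -E; lra.
have F2020 : (g (inord 2) (inord 0) (inord 2) (inord 0)) = 1.
  move: (H (ev 0 0 1 0) (ev 1 0 0 0)); rewrite key !(sE_2, sE_0) /P_cor !ev0 !ev1 !ev2 !ev3 ?(gZl hZ03, gZr hZ03, gZl hZ11, gZr hZ11, gZl hZ21, gZr hZ21, gZl hZ22, gZr hZ22, gZl hZ30, gZr hZ30) ?(gEl h13) ?(gEr h13) => E; clear -E; lra.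
have F2323 : (g (inord 2) (inord 3) (inord 2) (inord 3)) = 1.
  move: (H (ev 0 0 1 0) (ev 0 0 0 1)); rewrite key !(sE_2, sE_3) /P_cor !ev0 !ev1 !ev2 !ev3 ?(gZl hZ03, gZr hZ03, gZl hZ11, gZr hZ11, gZl hZ21, gZr hZ21, gZl hZ22, gZr hZ22, gZl hZ30, gZr hZ30) ?(gEl h13) ?(gEr h13) => E; clear -E; lra.
have F2023 : (g (inord 2) (inord 0) (inord 2) (inord 3)) = 0.
  move: (H (ev 0 0 1 0) (ev 1 0 0 1)); rewrite key !(sE_2, sE_03) /P_cor !ev0 !ev1 !ev2 !ev3 ?(gZl hZ03, gZr hZ03, gZl hZ11, gZr hZ11, gZl hZ21, gZr hZ21, gZl hZ22, gZr hZ22, gZl hZ30, gZr hZ30) ?(gEl h13) ?(gEr h13) [g (inord 2) (inord 3) (inord 2) (inord 0)]gC F2020 F2323 => E; clear -E; lra.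
have F3131 : (g (inord 3) (inord 1) (inord 3) (inord 1)) = 1.
  move: (H (ev 0 0 0 1) (ev 0 1 0 0)); rewrite key !(sE_3, sE_1) /P_cor !ev0 !ev1 !ev2 !ev3 ?(gZl hZ03, gZr hZ03, gZl hZ11, gZr hZ11, gZl hZ21, gZr hZ21, gZl hZ22, gZr hZ22, gZl hZ30, gZr hZ30) ?(gEl h13) ?(gEr h13) => E; clear -E; lra.
have F3232 : (g (inord 3) (inord 2) (inord 3) (inord 2)) = 1.
  move: (H (ev 0 0 0 1) (ev 0 0 1 0)); rewrite key !(sE_3, sE_2) /P_cor !ev0 !ev1 !ev2 !ev3 ?(gZl hZ03, gZr hZ03, gZl hZ11, gZr hZ11, gZl hZ21, gZr hZ21, gZl hZ22, gZr hZ22, gZl hZ30, gZr hZ30) ?(gEl h13) ?(gEr h13) => E; clear -E; lra.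
have F3333 : (g (inord 3) (inord 3) (inord 3) (inord 3)) = 1.
  move: (H (ev 0 0 0 1) (ev 0 0 0 1)); rewrite key !(sE_3, sE_3) /P_cor !ev0 !ev1 !ev2 !ev3 ?(gZl hZ03, gZr hZ03, gZl hZ11, gZr hZ11, gZl hZ21, gZr hZ21, gZl hZ22, gZr hZ22, gZl hZ30, gZr hZ30) ?(gEl h13) ?(gEr h13) => E; clear -E; lra.
have F3132 : (g (inord 3) (inord 1) (inord 3) (inord 2)) = 0.
  move: (H (ev 0 0 0 1) (ev 0 1 1 0)); rewrite key !(sE_3, sE_12) /P_cor !ev0 !ev1 !ev2 !ev3 ?(gZl hZ03, gZr hZ03, gZl hZ11, gZr hZ11, gZl hZ21, gZr hZ21, gZl hZ22, gZr hZ22, gZl hZ30, gZr hZ30) ?(gEl h13) ?(gEr h13) [g (inord 3) (inord 2) (inord 3) (inord 1)]gC F3131 F3232 => E; clear -E; lra.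
have F3133 : (g (inord 3) (inord 1) (inord 3) (inord 3)) = 0.
  move: (H (ev 0 0 0 1) (ev 0 1 0 1)); rewrite key !(sE_3, sE_13) /P_cor !ev0 !ev1 !ev2 !ev3 ?(gZl hZ03, gZr hZ03, gZl hZ11, gZr hZ11, gZl hZ21, gZr hZ21, gZl hZ22, gZr hZ22, gZl hZ30, gZr hZ30) ?(gEl h13) ?(gEr h13) [g (inord 3) (inord 3) (inord 3) (inord 1)]gC F3131 F3333 => E; clear -E; lra.
have F3233 : (g (inord 3) (inord 2) (inord 3) (inord 3)) = 0.
  move: (H (ev 0 0 0 1) (ev 0 0 1 1)); rewrite key !(sE_3, sE_23) /P_cor !ev0 !ev1 !ev2 !ev3 ?(gZl hZ03, gZr hZ03, gZl hZ11, gZr hZ11, gZl hZ21, gZr hZ21, gZl hZ22, gZr hZ22, gZl hZ30, gZr hZ30) ?(gEl h13) ?(gEr h13) [g (inord 3) (inord 3) (inord 3) (inord 2)]gC F3232 F3333 => E; clear -E; lra.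
have F0010 : (g (inord 0) (inord 0) (inord 1) (inord 0)) = 0.
  move: (H (ev 1 1 0 0) (ev 1 0 0 0)); rewrite key !(sE_01, sE_0) /P_cor !ev0 !ev1 !ev2 !ev3 ?(gZl hZ03, gZr hZ03, gZl hZ11, gZr hZ11, gZl hZ21, gZr hZ21, gZl hZ22, gZr hZ22, gZl hZ30, gZr hZ30) ?(gEl h13) ?(gEr h13) [g (inord 1) (inord 0) (inord 0) (inord 0)]gC F0000 F1010 => E; clear -E; lra.
have F0110 : (g (inord 0) (inord 1) (inord 1) (inord 0)) = 0.
  move: (H (ev 1 1 0 0) (ev 1 1 0 0)); rewrite key !(sE_01, sE_01) /P_cor !ev0 !ev1 !ev2 !ev3 ?(gZl hZ03, gZr hZ03, gZl hZ11, gZr hZ11, gZl hZ21, gZr hZ21, gZl hZ22, gZr hZ22, gZl hZ30, gZr hZ30) ?(gEl h13) ?(gEr h13) [g (inord 0) (inord 1) (inord 0) (inord 0)]gC [g (inord 1) (inord 0) (inord 0) (inord 0)]gC [g (inord 1) (inord 0) (inord 0) (inord 1)]gC F0000 F0001 F0010 F0101 F1010 => E; clear -E; lra.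
have F0012 : (g (inord 0) (inord 0) (inord 1) (inord 2)) = 0.
  move: (H (ev 1 1 0 0) (ev 1 0 1 0)); rewrite key !(sE_01, sE_02) /P_cor !ev0 !ev1 !ev2 !ev3 ?(gZl hZ03, gZr hZ03, gZl hZ11, gZr hZ11, gZl hZ21, gZr hZ21, gZl hZ22, gZr hZ22, gZl hZ30, gZr hZ30) ?(gEl h13) ?(gEr h13) [g (inord 0) (inord 2) (inord 0) (inord 0)]gC [g (inord 1) (inord 0) (inord 0) (inord 0)]gC [g (inord 1) (inord 0) (inord 0) (inord 2)]gC [g (inord 1) (inord 2) (inord 0) (inord 0)]gC [g (inord 1) (inord 2) (inord 0) (inord 2)]gC [g (inord 1) (inord 2) (inord 1) (inord 0)]gC F0000 F0002 F0010 F0202 F0210 F0212 F1010 F1012 F1212 => E; clear -E; lra.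
have F0112 : (g (inord 0) (inord 1) (inord 1) (inord 2)) = 0.
  move: (H (ev 1 1 0 0) (ev 0 1 1 0)); rewrite key !(sE_01, sE_12) /P_cor !ev0 !ev1 !ev2 !ev3 ?(gZl hZ03, gZr hZ03, gZl hZ11, gZr hZ11, gZl hZ21, gZr hZ21, gZl hZ22, gZr hZ22, gZl hZ30, gZr hZ30) ?(gEl h13) ?(gEr h13) [g (inord 0) (inord 2) (inord 0) (inord 1)]gC [g (inord 1) (inord 2) (inord 0) (inord 1)]gC [g (inord 1) (inord 2) (inord 0) (inord 2)]gC F0101 F0102 F0202 F0212 F1212 => E; clear -E; lra.
have F0020 : (g (inord 0) (inord 0) (inord 2) (inord 0)) = 0.
  move: (H (ev 1 0 1 0) (ev 1 0 0 0)); rewrite key !(sE_02, sE_0) /P_cor !ev0 !ev1 !ev2 !ev3 ?(gZl hZ03, gZr hZ03, gZl hZ11, gZr hZ11, gZl hZ21, gZr hZ21, gZl hZ22, gZr hZ22, gZl hZ30, gZr hZ30) ?(gEl h13) ?(gEr h13) [g (inord 2) (inord 0) (inord 0) (inord 0)]gC F0000 F2020 => E; clear -E; lra.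
have F0120 : (g (inord 0) (inord 1) (inord 2) (inord 0)) = 0.
  move: (H (ev 1 0 1 0) (ev 1 1 0 0)); rewrite key !(sE_02, sE_01) /P_cor !ev0 !ev1 !ev2 !ev3 ?(gZl hZ03, gZr hZ03, gZl hZ11, gZr hZ11, gZl hZ21, gZr hZ21, gZl hZ22, gZr hZ22, gZl hZ30, gZr hZ30) ?(gEl h13) ?(gEr h13) [g (inord 0) (inord 1) (inord 0) (inord 0)]gC [g (inord 2) (inord 0) (inord 0) (inord 0)]gC [g (inord 2) (inord 0) (inord 0) (inord 1)]gC F0000 F0001 F0020 F0101 F2020 => E; clear -E; lra.
have F0220 : (g (inord 0) (inord 2) (inord 2) (inord 0)) = 0.
  move: (H (ev 1 0 1 0) (ev 1 0 1 0)); rewrite key !(sE_02, sE_02) /P_cor !ev0 !ev1 !ev2 !ev3 ?(gZl hZ03, gZr hZ03, gZl hZ11, gZr hZ11, gZl hZ21, gZr hZ21, gZl hZ22, gZr hZ22, gZl hZ30, gZr hZ30) ?(gEl h13) ?(gEr h13) [g (inord 0) (inord 2) (inord 0) (inord 0)]gC [g (inord 2) (inord 0) (inord 0) (inord 0)]gC [g (inord 2) (inord 0) (inord 0) (inord 2)]gC F0000 F0002 F0020 F0202 F2020 => E; clear -E; lra.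
have F0023 : (g (inord 0) (inord 0) (inord 2) (inord 3)) = 0.
  move: (H (ev 1 0 1 0) (ev 1 0 0 1)); rewrite key !(sE_02, sE_03) /P_cor !ev0 !ev1 !ev2 !ev3 ?(gZl hZ03, gZr hZ03, gZl hZ11, gZr hZ11, gZl hZ21, gZr hZ21, gZl hZ22, gZr hZ22, gZl hZ30, gZr hZ30) ?(gEl h13) ?(gEr h13) [g (inord 2) (inord 0) (inord 0) (inord 0)]gC [g (inord 2) (inord 3) (inord 0) (inord 0)]gC [g (inord 2) (inord 3) (inord 2) (inord 0)]gC F0000 F0020 F2020 F2023 F2323 => E; clear -E; lra.
have F0123 : (g (inord 0) (inord 1) (inord 2) (inord 3)) = 0.
  move: (H (ev 1 0 1 0) (ev 0 1 0 1)); rewrite key !(sE_02, sE_13) /P_cor !ev0 !ev1 !ev2 !ev3 ?(gZl hZ03, gZr hZ03, gZl hZ11, gZr hZ11, gZl hZ21, gZr hZ21, gZl hZ22, gZr hZ22, gZl hZ30, gZr hZ30) ?(gEl h13) ?(gEr h13) [g (inord 2) (inord 3) (inord 0) (inord 1)]gC F0101 F2323 => E; clear -E; lra.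
have F0223 : (g (inord 0) (inord 2) (inord 2) (inord 3)) = 0.
  move: (H (ev 1 0 1 0) (ev 0 0 1 1)); rewrite key !(sE_02, sE_23) /P_cor !ev0 !ev1 !ev2 !ev3 ?(gZl hZ03, gZr hZ03, gZl hZ11, gZr hZ11, gZl hZ21, gZr hZ21, gZl hZ22, gZr hZ22, gZl hZ30, gZr hZ30) ?(gEl h13) ?(gEr h13) [g (inord 2) (inord 3) (inord 0) (inord 2)]gC F0202 F2323 => E; clear -E; lra.
have F0131 : (g (inord 0) (inord 1) (inord 3) (inord 1)) = 0.
  move: (H (ev 1 0 0 1) (ev 0 1 0 0)); rewrite key !(sE_03, sE_1) /P_cor !ev0 !ev1 !ev2 !ev3 ?(gZl hZ03, gZr hZ03, gZl hZ11, gZr hZ11, gZl hZ21, gZr hZ21, gZl hZ22, gZr hZ22, gZl hZ30, gZr hZ30) ?(gEl h13) ?(gEr h13) [g (inord 3) (inord 1) (inord 0) (inord 1)]gC F0101 F3131 => E; clear -E; lra.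
have F0232 : (g (inord 0) (inord 2) (inord 3) (inord 2)) = 0.
  move: (H (ev 1 0 0 1) (ev 0 0 1 0)); rewrite key !(sE_03, sE_2) /P_cor !ev0 !ev1 !ev2 !ev3 ?(gZl hZ03, gZr hZ03, gZl hZ11, gZr hZ11, gZl hZ21, gZr hZ21, gZl hZ22, gZr hZ22, gZl hZ30, gZr hZ30) ?(gEl h13) ?(gEr h13) [g (inord 3) (inord 2) (inord 0) (inord 2)]gC F0202 F3232 => E; clear -E; lra.
have F0031 : (g (inord 0) (inord 0) (inord 3) (inord 1)) = 0.
  move: (H (ev 1 0 0 1) (ev 1 1 0 0)); rewrite key !(sE_03, sE_01) /P_cor !ev0 !ev1 !ev2 !ev3 ?(gZl hZ03, gZr hZ03, gZl hZ11, gZr hZ11, gZl hZ21, gZr hZ21, gZl hZ22, gZr hZ22, gZl hZ30, gZr hZ30) ?(gEl h13) ?(gEr h13) [g (inord 0) (inord 1) (inord 0) (inord 0)]gC [g (inord 3) (inord 1) (inord 0) (inord 0)]gC [g (inord 3) (inord 1) (inord 0) (inord 1)]gC F0000 F0001 F0101 F0131 F3131 => E; clear -E; lra.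
have F0032 : (g (inord 0) (inord 0) (inord 3) (inord 2)) = 0.
  move: (H (ev 1 0 0 1) (ev 1 0 1 0)); rewrite key !(sE_03, sE_02) /P_cor !ev0 !ev1 !ev2 !ev3 ?(gZl hZ03, gZr hZ03, gZl hZ11, gZr hZ11, gZl hZ21, gZr hZ21, gZl hZ22, gZr hZ22, gZl hZ30, gZr hZ30) ?(gEl h13) ?(gEr h13) [g (inord 0) (inord 2) (inord 0) (inord 0)]gC [g (inord 3) (inord 2) (inord 0) (inord 0)]gC [g (inord 3) (inord 2) (inord 0) (inord 2)]gC F0000 F0002 F0202 F0232 F3232 => E; clear -E; lra.
have F0033 : (g (inord 0) (inord 0) (inord 3) (inord 3)) = 0.
  move: (H (ev 1 0 0 1) (ev 1 0 0 1)); rewrite key !(sE_03, sE_03) /P_cor !ev0 !ev1 !ev2 !ev3 ?(gZl hZ03, gZr hZ03, gZl hZ11, gZr hZ11, gZl hZ21, gZr hZ21, gZl hZ22, gZr hZ22, gZl hZ30, gZr hZ30) ?(gEl h13) ?(gEr h13) [g (inord 3) (inord 3) (inord 0) (inord 0)]gC F0000 F3333 => E; clear -E; lra.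
have F0133 : (g (inord 0) (inord 1) (inord 3) (inord 3)) = 0.
  move: (H (ev 1 0 0 1) (ev 0 1 0 1)); rewrite key !(sE_03, sE_13) /P_cor !ev0 !ev1 !ev2 !ev3 ?(gZl hZ03, gZr hZ03, gZl hZ11, gZr hZ11, gZl hZ21, gZr hZ21, gZl hZ22, gZr hZ22, gZl hZ30, gZr hZ30) ?(gEl h13) ?(gEr h13) [g (inord 3) (inord 1) (inord 0) (inord 1)]gC [g (inord 3) (inord 3) (inord 0) (inord 1)]gC [g (inord 3) (inord 3) (inord 3) (inord 1)]gC F0101 F0131 F3131 F3133 F3333 => E; clear -E; lra.
have F0233 : (g (inord 0) (inord 2) (inord 3) (inord 3)) = 0.
  move: (H (ev 1 0 0 1) (ev 0 0 1 1)); rewrite key !(sE_03, sE_23) /P_cor !ev0 !ev1 !ev2 !ev3 ?(gZl hZ03, gZr hZ03, gZl hZ11, gZr hZ11, gZl hZ21, gZr hZ21, gZl hZ22, gZr hZ22, gZl hZ30, gZr hZ30) ?(gEl h13) ?(gEr h13) [g (inord 3) (inord 2) (inord 0) (inord 2)]gC [g (inord 3) (inord 3) (inord 0) (inord 2)]gC [g (inord 3) (inord 3) (inord 3) (inord 2)]gC F0202 F0232 F3232 F3233 F3333 => E; clear -E; lra.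
have F1020 : (g (inord 1) (inord 0) (inord 2) (inord 0)) = 0.
  move: (H (ev 0 1 1 0) (ev 1 0 0 0)); rewrite key !(sE_12, sE_0) /P_cor !ev0 !ev1 !ev2 !ev3 ?(gZl hZ03, gZr hZ03, gZl hZ11, gZr hZ11, gZl hZ21, gZr hZ21, gZl hZ22, gZr hZ22, gZl hZ30, gZr hZ30) ?(gEl h13) ?(gEr h13) [g (inord 2) (inord 0) (inord 1) (inord 0)]gC F1010 F2020 => E; clear -E; lra.
have F1220 : (g (inord 1) (inord 2) (inord 2) (inord 0)) = 0.
  move: (H (ev 0 1 1 0) (ev 1 0 1 0)); rewrite key !(sE_12, sE_02) /P_cor !ev0 !ev1 !ev2 !ev3 ?(gZl hZ03, gZr hZ03, gZl hZ11, gZr hZ11, gZl hZ21, gZr hZ21, gZl hZ22, gZr hZ22, gZl hZ30, gZr hZ30) ?(gEl h13) ?(gEr h13) [g (inord 1) (inord 2) (inord 1) (inord 0)]gC [g (inord 2) (inord 0) (inord 1) (inord 0)]gC [g (inord 2) (inord 0) (inord 1) (inord 2)]gC F1010 F1012 F1020 F1212 F2020 => E; clear -E; lra.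
have F1023 : (g (inord 1) (inord 0) (inord 2) (inord 3)) = 0.
  move: (H (ev 0 1 1 0) (ev 1 0 0 1)); rewrite key !(sE_12, sE_03) /P_cor !ev0 !ev1 !ev2 !ev3 ?(gZl hZ03, gZr hZ03, gZl hZ11, gZr hZ11, gZl hZ21, gZr hZ21, gZl hZ22, gZr hZ22, gZl hZ30, gZr hZ30) ?(gEl h13) ?(gEr h13) [g (inord 1) (inord 0) (inord 0) (inord 2)]gC [g (inord 2) (inord 0) (inord 0) (inord 2)]gC [g (inord 2) (inord 0) (inord 1) (inord 0)]gC [g (inord 2) (inord 3) (inord 0) (inord 2)]gC [g (inord 2) (inord 3) (inord 1) (inord 0)]gC [g (inord 2) (inord 3) (inord 2) (inord 0)]gC F1010 F0210 F1020 F0202 F0220 F0223 F2020 F2023 F2323 => E; clear -E; lra.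
have F1223 : (g (inord 1) (inord 2) (inord 2) (inord 3)) = 0.
  move: (H (ev 0 1 1 0) (ev 0 0 1 1)); rewrite key !(sE_12, sE_23) /P_cor !ev0 !ev1 !ev2 !ev3 ?(gZl hZ03, gZr hZ03, gZl hZ11, gZr hZ11, gZl hZ21, gZr hZ21, gZl hZ22, gZr hZ22, gZl hZ30, gZr hZ30) ?(gEl h13) ?(gEr h13) [g (inord 1) (inord 2) (inord 0) (inord 2)]gC [g (inord 2) (inord 3) (inord 0) (inord 2)]gC [g (inord 2) (inord 3) (inord 1) (inord 2)]gC F1212 F0212 F0202 F0223 F2323 => E; clear -E; lra.
have F1232 : (g (inord 1) (inord 2) (inord 3) (inord 2)) = 0.
  move: (H (ev 0 1 0 1) (ev 0 0 1 0)); rewrite key !(sE_13, sE_2) /P_cor !ev0 !ev1 !ev2 !ev3 ?(gZl hZ03, gZr hZ03, gZl hZ11, gZr hZ11, gZl hZ21, gZr hZ21, gZl hZ22, gZr hZ22, gZl hZ30, gZr hZ30) ?(gEl h13) ?(gEr h13) [g (inord 3) (inord 2) (inord 1) (inord 2)]gC F1212 F3232 => E; clear -E; lra.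
have F1031 : (g (inord 1) (inord 0) (inord 3) (inord 1)) = 0.
  move: (H (ev 0 1 0 1) (ev 1 1 0 0)); rewrite key !(sE_13, sE_01) /P_cor !ev0 !ev1 !ev2 !ev3 ?(gZl hZ03, gZr hZ03, gZl hZ11, gZr hZ11, gZl hZ21, gZr hZ21, gZl hZ22, gZr hZ22, gZl hZ30, gZr hZ30) ?(gEl h13) ?(gEr h13) [g (inord 3) (inord 1) (inord 1) (inord 0)]gC F1010 F3131 => E; clear -E; lra.
have F1032 : (g (inord 1) (inord 0) (inord 3) (inord 2)) = 0.
  move: (H (ev 0 1 0 1) (ev 1 0 1 0)); rewrite key !(sE_13, sE_02) /P_cor !ev0 !ev1 !ev2 !ev3 ?(gZl hZ03, gZr hZ03, gZl hZ11, gZr hZ11, gZl hZ21, gZr hZ21, gZl hZ22, gZr hZ22, gZl hZ30, gZr hZ30) ?(gEl h13) ?(gEr h13) [g (inord 1) (inord 2) (inord 1) (inord 0)]gC [g (inord 3) (inord 2) (inord 1) (inord 0)]gC [g (inord 3) (inord 2) (inord 1) (inord 2)]gC F1010 F1012 F1212 F1232 F3232 => E; clear -E; lra.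
have F1033 : (g (inord 1) (inord 0) (inord 3) (inord 3)) = 0.
  move: (H (ev 0 1 0 1) (ev 1 0 0 1)); rewrite key !(sE_13, sE_03) /P_cor !ev0 !ev1 !ev2 !ev3 ?(gZl hZ03, gZr hZ03, gZl hZ11, gZr hZ11, gZl hZ21, gZr hZ21, gZl hZ22, gZr hZ22, gZl hZ30, gZr hZ30) ?(gEl h13) ?(gEr h13) [g (inord 1) (inord 0) (inord 0) (inord 2)]gC [g (inord 3) (inord 3) (inord 0) (inord 2)]gC [g (inord 3) (inord 3) (inord 1) (inord 0)]gC F1010 F0210 F0202 F0233 F3333 => E; clear -E; lra.
have F1231 : (g (inord 1) (inord 2) (inord 3) (inord 1)) = 0.
  move: (H (ev 0 1 0 1) (ev 0 1 1 0)); rewrite key !(sE_13, sE_12) /P_cor !ev0 !ev1 !ev2 !ev3 ?(gZl hZ03, gZr hZ03, gZl hZ11, gZr hZ11, gZl hZ21, gZr hZ21, gZl hZ22, gZr hZ22, gZl hZ30, gZr hZ30) ?(gEl h13) ?(gEr h13) [g (inord 3) (inord 1) (inord 1) (inord 2)]gC [g (inord 3) (inord 2) (inord 1) (inord 2)]gC [g (inord 3) (inord 2) (inord 3) (inord 1)]gC F1212 F1232 F3131 F3132 F3232 => E; clear -E; lra.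
have F0231 : (g (inord 0) (inord 2) (inord 3) (inord 1)) = 0.
  move: (H (ev 0 1 0 1) (ev 0 1 0 1)); rewrite key !(sE_13, sE_13) /P_cor !ev0 !ev1 !ev2 !ev3 ?(gZl hZ03, gZr hZ03, gZl hZ11, gZr hZ11, gZl hZ21, gZr hZ21, gZl hZ22, gZr hZ22, gZl hZ30, gZr hZ30) ?(gEl h13) ?(gEr h13) [g (inord 3) (inord 1) (inord 0) (inord 2)]gC [g (inord 3) (inord 3) (inord 0) (inord 2)]gC [g (inord 3) (inord 3) (inord 3) (inord 1)]gC F0202 F0233 F3131 F3133 F3333 => E; clear -E; lra.
have F1233 : (g (inord 1) (inord 2) (inord 3) (inord 3)) = 0.
  move: (H (ev 0 1 0 1) (ev 0 0 1 1)); rewrite key !(sE_13, sE_23) /P_cor !ev0 !ev1 !ev2 !ev3 ?(gZl hZ03, gZr hZ03, gZl hZ11, gZr hZ11, gZl hZ21, gZr hZ21, gZl hZ22, gZr hZ22, gZl hZ30, gZr hZ30) ?(gEl h13) ?(gEr h13) [g (inord 1) (inord 2) (inord 0) (inord 2)]gC [g (inord 3) (inord 2) (inord 0) (inord 2)]gC [g (inord 3) (inord 2) (inord 1) (inord 2)]gC [g (inord 3) (inord 3) (inord 0) (inord 2)]gC [g (inord 3) (inord 3) (inord 1) (inord 2)]gC [g (inord 3) (inord 3) (inord 3) (inord 2)]gC F1212 F0212 F1232 F0202 F0232 F0233 F3232 F3233 F3333 => E; clear -E; lra.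
have F2333 : (g (inord 2) (inord 3) (inord 3) (inord 3)) = 0.
  move: (H (ev 0 0 1 1) (ev 0 0 0 1)); rewrite key !(sE_23, sE_3) /P_cor !ev0 !ev1 !ev2 !ev3 ?(gZl hZ03, gZr hZ03, gZl hZ11, gZr hZ11, gZl hZ21, gZr hZ21, gZl hZ22, gZr hZ22, gZl hZ30, gZr hZ30) ?(gEl h13) ?(gEr h13) [g (inord 3) (inord 3) (inord 2) (inord 3)]gC F2323 F3333 => E; clear -E; lra.
have F2031 : (g (inord 2) (inord 0) (inord 3) (inord 1)) = 0.
  move: (H (ev 0 0 1 1) (ev 1 1 0 0)); rewrite key !(sE_23, sE_01) /P_cor !ev0 !ev1 !ev2 !ev3 ?(gZl hZ03, gZr hZ03, gZl hZ11, gZr hZ11, gZl hZ21, gZr hZ21, gZl hZ22, gZr hZ22, gZl hZ30, gZr hZ30) ?(gEl h13) ?(gEr h13) [g (inord 3) (inord 1) (inord 2) (inord 0)]gC F2020 F3131 => E; clear -E; lra.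
have F2032 : (g (inord 2) (inord 0) (inord 3) (inord 2)) = 0.
  move: (H (ev 0 0 1 1) (ev 1 0 1 0)); rewrite key !(sE_23, sE_02) /P_cor !ev0 !ev1 !ev2 !ev3 ?(gZl hZ03, gZr hZ03, gZl hZ11, gZr hZ11, gZl hZ21, gZr hZ21, gZl hZ22, gZr hZ22, gZl hZ30, gZr hZ30) ?(gEl h13) ?(gEr h13) [g (inord 3) (inord 2) (inord 2) (inord 0)]gC F2020 F3232 => E; clear -E; lra.
have F2033 : (g (inord 2) (inord 0) (inord 3) (inord 3)) = 0.
  move: (H (ev 0 0 1 1) (ev 1 0 0 1)); rewrite key !(sE_23, sE_03) /P_cor !ev0 !ev1 !ev2 !ev3 ?(gZl hZ03, gZr hZ03, gZl hZ11, gZr hZ11, gZl hZ21, gZr hZ21, gZl hZ22, gZr hZ22, gZl hZ30, gZr hZ30) ?(gEl h13) ?(gEr h13) [g (inord 2) (inord 3) (inord 2) (inord 0)]gC [g (inord 3) (inord 3) (inord 2) (inord 0)]gC [g (inord 3) (inord 3) (inord 2) (inord 3)]gC F2020 F2023 F2323 F2333 F3333 => E; clear -E; lra.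
have F2331 : (g (inord 2) (inord 3) (inord 3) (inord 1)) = 0.
  move: (H (ev 0 0 1 1) (ev 0 1 0 1)); rewrite key !(sE_23, sE_13) /P_cor !ev0 !ev1 !ev2 !ev3 ?(gZl hZ03, gZr hZ03, gZl hZ11, gZr hZ11, gZl hZ21, gZr hZ21, gZl hZ22, gZr hZ22, gZl hZ30, gZr hZ30) ?(gEl h13) ?(gEr h13) [g (inord 3) (inord 1) (inord 2) (inord 3)]gC [g (inord 3) (inord 3) (inord 2) (inord 3)]gC [g (inord 3) (inord 3) (inord 3) (inord 1)]gC F2323 F2333 F3131 F3133 F3333 => E; clear -E; lra.
have F2332 : (g (inord 2) (inord 3) (inord 3) (inord 2)) = 0.
  move: (H (ev 0 0 1 1) (ev 0 0 1 1)); rewrite key !(sE_23, sE_23) /P_cor !ev0 !ev1 !ev2 !ev3 ?(gZl hZ03, gZr hZ03, gZl hZ11, gZr hZ11, gZl hZ21, gZr hZ21, gZl hZ22, gZr hZ22, gZl hZ30, gZr hZ30) ?(gEl h13) ?(gEr h13) [g (inord 3) (inord 2) (inord 2) (inord 3)]gC [g (inord 3) (inord 3) (inord 2) (inord 3)]gC [g (inord 3) (inord 3) (inord 3) (inord 2)]gC F2323 F2333 F3232 F3233 F3333 => E; clear -E; lra.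
have F0132 : (g (inord 0) (inord 1) (inord 3) (inord 2)) = 0.
  move: (H (ev 1 0 0 1) (ev 0 1 1 0)); rewrite key !(sE_03, sE_12) /P_cor !ev0 !ev1 !ev2 !ev3 ?(gZl hZ03, gZr hZ03, gZl hZ11, gZr hZ11, gZl hZ21, gZr hZ21, gZl hZ22, gZr hZ22, gZl hZ30, gZr hZ30) ?(gEl h13) ?(gEr h13) [g (inord 0) (inord 2) (inord 0) (inord 1)]gC [g (inord 3) (inord 1) (inord 0) (inord 1)]gC [g (inord 3) (inord 1) (inord 0) (inord 2)]gC [g (inord 3) (inord 2) (inord 0) (inord 1)]gC [g (inord 3) (inord 2) (inord 0) (inord 2)]gC [g (inord 3) (inord 2) (inord 3) (inord 1)]gC F0101 F0102 F0131 F0202 F0231 F0232 F3131 F3132 F3232 => E; clear -E; lra.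
pose ti (a : 'I_10) : 'I_4 := inord (nth 0%N [:: 0; 0; 0; 1; 1; 2; 2; 3; 3; 3]%N a).
pose tj (a : 'I_10) : 'I_4 := inord (nth 0%N [:: 0; 1; 2; 0; 2; 0; 3; 1; 2; 3]%N a).
pose M := \matrix_(a < 10, p < r) c p (ti a) (tj a).
suff HM : M *m M^T = 1%:M.
  have := mxrankM_maxl M M^T; rewrite HM mxrank1 => /leq_trans; apply; exact: rank_leq_col.
  apply/matrixP => a b; rewrite !mxE.
  transitivity (g (ti a) (tj a) (ti b) (tj b)).
    by apply: eq_bigr => p _; rewrite !mxE.
  rewrite -val_eqE.
  case: a => a Ha; case: b => b Hb.
  case: a Ha => [|[|[|[|[|[|[|[|[|[|a]]]]]]]]]] Ha; last by [].
  all: case: b Hb => [|[|[|[|[|[|[|[|[|[|b]]]]]]]]]] Hb; last by [].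
  all: rewrite /ti /tj /=.
  all: first [ by rewrite F0000 | by rewrite gC F0000 | by rewrite F0001 | by rewrite gC F0001 | by rewrite F0002 | by rewrite gC F0002 | by rewrite F0010 | by rewrite gC F0010 | by rewrite F0012 | by rewrite gC F0012 | by rewrite F0020 | by rewrite gC F0020 | by rewrite F0023 | by rewrite gC F0023 | by rewrite F0031 | by rewrite gC F0031 | by rewrite F0032 | by rewrite gC F0032 | by rewrite F0033 | by rewrite gC F0033 | by rewrite F0101 | by rewrite gC F0101 | by rewrite F0102 | by rewrite gC F0102 | by rewrite F0110 | by rewrite gC F0110 | by rewrite F0112 | by rewrite gC F0112 | by rewrite F0120 | by rewrite gC F0120 | by rewrite F0123 | by rewrite gC F0123 | by rewrite F0131 | by rewrite gC F0131 | by rewrite F0132 | by rewrite gC F0132 | by rewrite F0133 | by rewrite gC F0133 | by rewrite F0202 | by rewrite gC F0202 | by rewrite F0210 | by rewrite gC F0210 | by rewrite F0212 | by rewrite gC F0212 | by rewrite F0220 | by rewrite gC F0220 | by rewrite F0223 | by rewrite gC F0223 | by rewrite F0231 | by rewrite gC F0231 | by rewrite F0232 | by rewrite gC F0232 | by rewrite F0233 | by rewrite gC F0233 | by rewrite F1010 | by rewrite gC F1010 | by rewrite F1012 | by rewrite gC F1012 | by rewrite F1020 | by rewrite gC F1020 | by rewrite F1023 | by rewrite gC F1023 | by rewrite F1031 | by rewrite gC F1031 | by rewrite F1032 | by rewrite gC F1032 | by rewrite F1033 | by rewrite gC F1033 | by rewrite F1212 | by rewrite gC F1212 | by rewrite F1220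 | by rewrite gC F1220 | by rewrite F1223 | by rewrite gC F1223 | by rewrite F1231 | by rewrite gC F1231 | by rewrite F1232 | by rewrite gC F1232 | by rewrite F1233 | by rewrite gC F1233 | by rewrite F2020 | by rewrite gC F2020 | by rewrite F2023 | by rewrite gC F2023 | by rewrite F2031 | by rewrite gC F2031 | by rewrite F2032 | by rewrite gC F2032 | by rewrite F2033 | by rewrite gC F2033 | by rewrite F2323 | by rewrite gC F2323 | by rewrite F2331 | by rewrite gC F2331 | by rewrite F2332 | by rewrite gC F2332 | by rewrite F2333 | by rewrite gC F2333 | by rewrite F3131 | by rewrite gC F3131 | by rewrite F3132 | by rewrite gC F3132 | by rewrite F3133 | by rewrite gC F3133 | by rewrite F3232 | by rewrite gC F3232 | by rewrite F3233 | by rewrite gC F3233 | by rewrite F3333 | by rewrite gC F3333 ].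
Qed.


End Inner.

Definition cUn (p i j : nat) : R :=
  match p, i, j with
  | 0%N, 0%N, 0%N => 1
  | 1%N, 0%N, 1%N => 1
  | 2%N, 1%N, 0%N => 1
  | 3%N, 1%N, 2%N => 1
  | 4%N, 2%N, 0%N => 1
  | 5%N, 2%N, 3%N => 1
  | 6%N, 3%N, 1%N => 1
  | 7%N, 3%N, 2%N => 1
  | 8%N, 3%N, 3%N => 1
  | 9%N, 0%N, 2%N => 1
  | 9%N, 1%N, 3%N => 1
  | _, _, _ => 0
  end.
Definition cU (p : 'I_10) (i j : 'I_4) : R := cUn p i j.

Lemma upper x y : P_cor x y = \sum_(p < 10) (bilin (cU p) x y) ^+ 2.
Proof.
rewrite sum10 /bilin !sum4 /cU !inordK // /P_cor /=.
ring.
Qed.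

End S.

Theorem corollary3p2 (R : realType) :
  BSR_ge R 4 4 10 /\ is_biquad (@P_cor R) /\ sos_rank_is (@P_cor R) 10.
Proof.
have Hb : is_biquad (@P_cor R).
  by exists (g (@cU R)) => x y; rewrite biquad_g upper.
have Hs : sos_with (@P_cor R) 10 by exists (@cU R); exact: upper.
have Hl : forall r, sos_with (@P_cor R) r -> (10 <= r)%N.
  by move=> r [c Hc]; apply: (lower Hc).
split; last by [].
by exists (@P_cor R); split => //; exists 10%N.
Qed.
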